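(* Let $(X,P,o)$ be a generalized parametric metric space such that $P$ satisfies (P5) and $o$ is continuous. Then $(X,\tau_P)$ is a Hausdorff topological space.
   Context: A binary operation $o:[0,\infty)\times[0,\infty)\to[0,\infty)$ (written $\alpha\, o\, \beta$) is assumed to satisfy, for all $\alpha,\beta,\gamma\in[0,\infty)$: (a) $\alpha\, o\, 0=\alpha$; (b) $\alpha\le\beta\implies \alpha\, o\,\gamma\le\beta\, o\,\gamma$; (c) $\alpha\, o\,\gamma=\gamma\, o\,\alpha$; (d) $\alpha\, o\,(\beta\, o\,\gamma)=(\alpha\, o\,\beta)\, o\,\gamma$. It is continuous if whenever $\alpha_n\to\alpha$ and $\beta_n\to\beta$ in $[0,\infty)$ we have $\alpha_n\, o\,\beta_n\to\alpha\, o\,\beta$. A generalized parametric metric on a nonempty set $X$ is a function $P:X\times X\times(0,\infty)\to[0,\infty)$ such that: (P1) $P(a,b,t)=0$ for all $t>0$ if and only if $a=b$; (P2) $P(a,b,t)=P(b,a,t)$ for all $a,b\in X$, $t>0$; (P3) $P(a,b,s+t)\le P(a,x,s)\, o\, P(b,x,t)$ for all $s,t>0$ and $a,b,x\in X$. The triple $(X,P,o)$ is a generalized parametric metric space. Condition (P5): for all $a,b\in X$, the map $t\mapsto P(a,b,t)$ is continuous on $(0,\infty)$. Open ball: $B(a,\alpha,t)=\{b\in X: P(a,b,t)<\alpha\}$. $\tau_P$ is the topology consisting of all $A\subseteq X$ such that for every $a\in A$ there exist $\alpha>0,t>0$ with $B(a,\alpha,t)\subseteq A$. *)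

(* Defs.v *)
From Stdlib Require Import Reals.
Open Scope R_scope.

(* A binary operation o on [0,oo), modelled as o : R -> R -> R that maps
   [0,oo) x [0,oo) into [0,oo), with axioms (a)-(d) for nonnegative arguments. *)
Definition is_gen_op (o : R -> R -> R) : Prop :=
  (forall a b, 0 <= a -> 0 <= b -> 0 <= o a b) /\
  (forall a, 0 <= a -> o a 0 = a) /\
  (forall a b c, 0 <= a -> 0 <= b -> 0 <= c -> a <= b -> o a c <= o b c) /\
  (forall a c, 0 <= a -> 0 <= c -> o a c = o c a) /\
  (forall a b c, 0 <= a -> 0 <= b -> 0 <= c -> o a (o b c) = o (o a b) c).

Definition op_continuous (o : R -> R -> R) : Prop :=
  forall (an bn : nat -> R) (a b : R),
    (forall n, 0 <= an n) -> (forall n, 0 <= bn n) -> 0 <= a -> 0 <= b ->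
    Un_cv an a -> Un_cv bn b -> Un_cv (fun n => o (an n) (bn n)) (o a b).

(* Generalized parametric metric: P is only meaningful for t > 0. *)
Definition is_gen_param_metric (X : Type) (o : R -> R -> R)
  (P : X -> X -> R -> R) : Prop :=
  (forall a b t, 0 < t -> 0 <= P a b t) /\
  (forall a b, (forall t, 0 < t -> P a b t = 0) <-> a = b) /\
  (forall a b t, 0 < t -> P a b t = P b a t) /\
  (forall a b x s t, 0 < s -> 0 < t -> P a b (s + t) <= o (P a x s) (P b x t)).

Definition P5 (X : Type) (P : X -> X -> R -> R) : Prop :=
  forall (a b : X) (tn : nat -> R) (t : R),
    0 < t -> (forall n, 0 < tn n) -> Un_cv tn t ->
    Un_cv (fun n => P a b (tn n)) (P a b t).

Definition ball (X : Type) (P : X -> X -> R -> R) (a : X) (al t : R) : X -> Prop :=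
  fun b => P a b t < al.

Definition tauP (X : Type) (P : X -> X -> R -> R) (A : X -> Prop) : Prop :=
  forall a, A a -> exists al t, 0 < al /\ 0 < t /\
    (forall b, ball X P a al t b -> A b).

Definition is_topology (X : Type) (tau : (X -> Prop) -> Prop) : Prop :=
  tau (fun _ => False) /\ tau (fun _ => True) /\
  (forall (I : Type) (F : I -> X -> Prop), (forall i, tau (F i)) ->
      tau (fun x => exists i, F i x)) /\
  (forall A B, tau A -> tau B -> tau (fun x => A x /\ B x)).

Definition hausdorff (X : Type) (tau : (X -> Prop) -> Prop) : Prop :=
  forall a b : X, a <> b -> exists U V, tau U /\ tau V /\ U a /\ V b /\
    (forall x, U x -> V x -> False).

(* Main.v *)
Require Import Defs.
From Stdlib Require Import Reals Lra Lia.
Open Scope R_scope.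
Lemma cv_inv : Un_cv (fun n => / INR (S n)) 0.
Proof.
  intros e He.
  destruct (archimed (/ e)) as [H1 _].
  assert (0 <= IZR (up (/e))) by (pose proof (Rinv_0_lt_compat e He); lra).
  destruct (IZN (up (/ e))) as [N HN]. { apply le_IZR; simpl; lra. }
  exists N. intros n Hn. unfold R_dist.
  rewrite Rminus_0_r. rewrite Rabs_pos_eq.
  2:{ left. apply Rinv_0_lt_compat. apply lt_0_INR; lia. }
  rewrite HN, <- INR_IZR_INZ in H1.
  assert (INR N <= INR n) by (apply le_INR; lia).
  rewrite S_INR.
  replace e with (/ / e) by (field; lra).
  apply Rinv_lt_contravar.
  - apply Rmult_lt_0_compat. apply Rinv_0_lt_compat; lra. pose proof (pos_INR n); lra.
  - lra.
Qed.

Section S.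
Variables (X : Type) (o : R -> R -> R) (P : X -> X -> R -> R).
Hypothesis Ho : is_gen_op o.
Hypothesis Hc : op_continuous o.
Hypothesis HP : is_gen_param_metric X o P.

Lemma Pnn a b t : 0 < t -> 0 <= P a b t.
Proof. destruct HP as [H _]. auto. Qed.

Lemma mono2 x y y' : 0 <= x -> 0 <= y -> y <= y' -> o x y <= o x y'.
Proof.
  intros hx hy hyy. destruct Ho as (_&_&Hm&Hcm&_).
  rewrite (Hcm x y), (Hcm x y') by lra. apply Hm; lra.
Qed.

Lemma Pmono a b s t : 0 < s -> 0 < t -> P a b (s + t) <= P a b t.
Proof.
  intros hs ht. destruct HP as (H0&H1&H2&H3).
  destruct Ho as (Hn&Hz&Hm&Hcm&Ha).
  eapply Rle_trans. apply (H3 a b a s t hs ht).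
  assert (P a a s = 0) by (apply (proj2 (H1 a a)); auto).
  rewrite H, Hcm, Hz; try lra; try apply H0; auto. rewrite H2; auto. lra.
Qed.

Lemma Pmono' a b s t : 0 < s -> s <= t -> P a b t <= P a b s.
Proof.
  intros hs hst. destruct (Req_dec s t) as [->|hne]. lra.
  replace t with ((t - s) + s) by ring. apply Pmono; lra.
Qed.

Lemma cont0 x : 0 <= x -> Un_cv (fun n => o x (/ INR (S n))) x.
Proof.
  intros hx. destruct Ho as (Hn&Hz&Hm&Hcm&Ha).
  pattern x at 2; rewrite <- (Hz x hx).
  apply Hc; auto. intros; left; apply Rinv_0_lt_compat, lt_0_INR; lia. lra.
  intros e He; exists 0%nat; intros; unfold R_dist; rewrite Rminus_diag, Rabs_R0; auto.
  apply cv_inv.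
Qed.

Definition U a al t := fun z => exists t', 0 < t' < t /\ P a z t' < al.

Lemma U_open a al t : tauP X P (U a al t).
Proof.
  intros z [t' [[h1 h2] h3]].
  set (b := P a z t') in *.
  assert (hb : 0 <= b) by (apply Pnn; lra).
  destruct (cont0 b hb (al - b)) as [N HN]. lra.
  specialize (HN N (le_n _)). unfold R_dist in HN.
  apply Rabs_def2 in HN as [HN1 HN2].
  exists (/ INR (S N)), ((t - t') / 2). split. apply Rinv_0_lt_compat, lt_0_INR; lia.
  split. lra.
  intros w hw. unfold ball in hw. exists (t' + (t - t') / 2). split. lra.
  destruct HP as (H0&H1&H2&H3).
  eapply Rle_lt_trans. apply (H3 a w z t' ((t - t')/2)); lra.
  eapply Rle_lt_trans. apply mono2. apply Pnn; lra. apply Pnn; lra.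
  rewrite H2 by lra. left; exact hw. fold b. lra.
Qed.

Lemma U_sub a al t z : U a al t z -> P a z t < al.
Proof. intros [t' [[h1 h2] h3]]. eapply Rle_lt_trans; [apply Pmono'|]; eauto; lra. Qed.

Lemma U_center a al t : 0 < al -> 0 < t -> U a al t a.
Proof.
  intros. exists (t/2). split. lra.
  destruct HP as (G0&G1&_). rewrite (proj2 (G1 a a)); auto; lra.
Qed.
End S.

Theorem mainTheorem7 (X : Type) (o : R -> R -> R) (P : X -> X -> R -> R) :
  inhabited X ->
  is_gen_op o -> op_continuous o -> is_gen_param_metric X o P -> P5 X P ->
  is_topology X (tauP X P) /\ hausdorff X (tauP X P).
Proof.
  intros _ Ho Hc HP _. split; [split; [|split; [|split]]|].
  - intros a [].
  - intros a _. exists 1, 1. split. lra. split. lra. auto.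
  - intros I F HF x [i Hi]. destruct (HF i x Hi) as (al&t&h1&h2&h3).
    exists al, t. split; auto. split; auto. intros b hb. exists i; auto.
  - intros A B HA HB x [hA hB].
    destruct (HA x hA) as (al1&t1&h1&h2&h3).
    destruct (HB x hB) as (al2&t2&k1&k2&k3).
    exists (Rmin al1 al2), (Rmin t1 t2).
    split. apply Rmin_pos; auto. split. apply Rmin_pos; auto.
    intros b hb. unfold ball in hb. split.
    + apply h3. unfold ball. eapply Rle_lt_trans. apply (Pmono' X o P Ho HP x b (Rmin t1 t2) t1).
      apply Rmin_pos; auto. apply Rmin_l. pose proof (Rmin_l al1 al2); lra.
    + apply k3. unfold ball. eapply Rle_lt_trans. apply (Pmono' X o P Ho HP x b (Rmin t1 t2) t2).
      apply Rmin_pos; auto. apply Rmin_r. pose proof (Rmin_r al1 al2); lra.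
  - intros a b hab.
    assert (exists t0, 0 < t0 /\ P a b t0 <> 0) as [t0 [ht0 hne]].
    { destruct (Classical_Prop.classic (exists t0, 0 < t0 /\ P a b t0 <> 0)) as [h|h]; auto.
      exfalso. apply hab. destruct HP as (_&H1&_). apply H1. intros t ht.
      destruct (Req_dec (P a b t) 0); auto. exfalso; apply h; eauto. }
    assert (hc : 0 < P a b t0) by (pose proof (Pnn X o P HP a b t0 ht0); lra).
    pose proof Ho as (Hn&Hz&Hm&Hcm&Ha).
    assert (hcv : Un_cv (fun n => o (/ INR (S n)) (/ INR (S n))) 0).
    { rewrite <- (Hz 0) by lra. apply Hc; try lra; try apply cv_inv;
      intros; left; apply Rinv_0_lt_compat, lt_0_INR; lia. }
    destruct (hcv (P a b t0) hc) as [N HN]. specialize (HN N (le_n _)).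
    unfold R_dist in HN. apply Rabs_def2 in HN as [HN1 HN2].
    set (al := / INR (S N)) in *.
    assert (hal : 0 < al) by (apply Rinv_0_lt_compat, lt_0_INR; lia).
    exists (U X P a al (t0/2)), (U X P b al (t0/2)).
    split. eapply U_open; eauto. split. eapply U_open; eauto.
    split. eapply U_center; eauto; lra. split. eapply U_center; eauto; lra.
    intros z hz1 hz2.
    apply (U_sub X o P Ho HP) in hz1. apply (U_sub X o P Ho HP) in hz2.
    destruct HP as (H0&H1&H2&H3).
    assert (P a b t0 <= o al al); [|lra].
    replace t0 with (t0/2 + t0/2) by field.
    eapply Rle_trans. apply (H3 a b z); lra.
    eapply Rle_trans. apply (Hm _ al); try lra; try apply H0; lra.
    apply mono2; auto; try lra; apply H0; lra.
Qed.
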